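(* For every $\alpha$ with $1/2<\alpha<3/4$ and every $(x,y)\in[0,1]^2\setminus\{(0,0)\}$, we have $G_\alpha^n(x,y)\to(2/3,2/3)$ as $n\to\infty$. That is, the fixed point $(2/3,2/3)$ attracts all points of the square except the fixed point $(0,0)$.
   Context: Let $\tau:[0,1]\to[0,1]$ be the symmetric tent map, $\tau(x)=2x$ for $0\le x<1/2$ and $\tau(x)=2-2x$ for $1/2\le x\le 1$. For $0<\alpha<1$ define $G_\alpha:[0,1]^2\to[0,1]^2$ by $G_\alpha(x,y)=(y,\tau(\alpha y+(1-\alpha)x))$. *)

(* Defs.v *)
From Stdlib Require Import Reals Lra.
Open Scope R_scope.

Definition tent (x : R) : R :=
  if Rlt_dec x (1/2) then 2 * x else 2 - 2 * x.

Definition G (alpha : R) (p : R * R) : R * R :=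
  (snd p, tent (alpha * snd p + (1 - alpha) * fst p)).

Fixpoint Gn (alpha : R) (n : nat) (p : R * R) : R * R :=
  match n with
  | O => p
  | S k => G alpha (Gn alpha k p)
  end.

(* Main.v *)
Require Import Defs.
From Stdlib Require Import Reals Lra Lia Psatz Classical.
Open Scope R_scope.

Definition u (a x y : R) (n : nat) : R := fst (Gn a n (x, y)).

Lemma u_SS a x y n :
  u a x y (S (S n)) = tent (a * u a x y (S n) + (1 - a) * u a x y n).
Proof. reflexivity. Qed.

Lemma tent_range z : 0 <= z <= 1 -> 0 <= tent z <= 1.
Proof. intros H; unfold tent; destruct (Rlt_dec z (1/2)); lra. Qed.

Lemma u_range a x y : 0 <= a <= 1 -> 0 <= x <= 1 -> 0 <= y <= 1 ->
  forall n, 0 <= u a x y n <= 1.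
Proof.
  intros Ha Hx Hy.
  assert (H : forall n, 0 <= u a x y n <= 1 /\ 0 <= u a x y (S n) <= 1).
  { induction n as [|n [IH1 IH2]].
    - split; [exact Hx | exact Hy].
    - split; [exact IH2|]. rewrite u_SS. apply tent_range. split; nra. }
  intro n; apply H.
Qed.

Lemma u_nz a x y : 0 < a < 1 -> 0 <= x <= 1 -> 0 <= y <= 1 -> (x,y) <> (0,0) ->
  forall n, u a x y n <> 0 \/ u a x y (S n) <> 0.
Proof.
  intros Ha Hx Hy Hxy.
  assert (Hr := u_range a x y ltac:(lra) Hx Hy).
  induction n as [|n IH].
  - destruct (Req_dec x 0) as [H0|H0]; [right|left; exact H0].
    intro Hy0. apply Hxy. change (y = 0) in Hy0. rewrite H0, Hy0. reflexivity.
  - destruct (Req_dec (u a x y (S n)) 0) as [H0|H0]; [right|left; exact H0].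
    rewrite u_SS, H0. destruct IH as [IH|IH]; [|contradiction].
    pose proof (Hr n) as Hn.
    assert (Hp : 0 < u a x y n) by lra.
    unfold tent; destruct (Rlt_dec _ (1/2)); intro Hc; nra.
Qed.

Theorem theorem6 :
  forall (alpha x y : R),
    1/2 < alpha < 3/4 ->
    0 <= x <= 1 -> 0 <= y <= 1 ->
    (x, y) <> (0, 0) ->
    Un_cv (fun n => fst (Gn alpha n (x, y))) (2/3) /\
    Un_cv (fun n => snd (Gn alpha n (x, y))) (2/3).
Proof.
  intros a x y Ha Hx Hy Hxy.
  assert (Hr : forall n, 0 <= u a x y n <= 1) by (apply u_range; lra).
  assert (Hnz := u_nz a x y ltac:(lra) Hx Hy Hxy).
  assert (Hrec := u_SS a x y).
  set (v := u a x y) in *.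
  set (p := (5 - 6*a)/2).
  set (k := (3 - 4*a)*(2*a-1)/2).
  assert (Hk : 0 < k) by (unfold k; nra).
  assert (Hp : 1/4 < p) by (unfold p; lra).
  set (W := fun n => p*(v n - 2/3)^2 + (v n - 2/3)*(v (S n) - 2/3) + (v (S n) - 2/3)^2).
  assert (Hstep : forall n, W (S n) + k * (v n - v (S n))^2 <= W n).
  { intro n. unfold W. rewrite (Hrec n).
    pose proof (Hr n) as HA. pose proof (Hr (S n)) as HB.
    set (A := v n) in *. set (B := v (S n)) in *.
    unfold tent; destruct (Rlt_dec _ (1/2)) as [Hz|Hz].
    - assert (Eq : p*(B-2/3)^2 + (B-2/3)*(2*(a*B+(1-a)*A)-2/3)
                   + (2*(a*B+(1-a)*A)-2/3)^2 + k*(A-B)^2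
                   = p*(A-2/3)^2+(A-2/3)*(B-2/3)+(B-2/3)^2
                     + (4*(a*B+(1-a)*A)-2)*B) by (unfold p, k; field).
      assert (0 <= (2 - 4*(a*B+(1-a)*A))*B) by (apply Rmult_le_pos; lra).
      lra.
    - assert (Eq : p*(B-2/3)^2 + (B-2/3)*(2 - 2*(a*B+(1-a)*A)-2/3)
                   + (2 - 2*(a*B+(1-a)*A)-2/3)^2 + k*(A-B)^2
                   = p*(A-2/3)^2+(A-2/3)*(B-2/3)+(B-2/3)^2) by (unfold p, k; field).
      lra. }
  assert (Hpos : forall n, 0 <= W n).
  { intro n. unfold W. set (e1 := v n - 2/3). set (e2 := v (S n) - 2/3).
    pose proof (pow2_ge_0 (e1 + 2*e2)); pose proof (pow2_ge_0 e1); nra. }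
  destruct (decreasing_cv W) as [l HW].
  { intro n. pose proof (Hstep n). pose proof (pow2_ge_0 (v n - v (S n))). nra. }
  { unfold has_lb, bound, is_upper_bound, EUn. exists 0. intros r [i Hi]. rewrite Hi. unfold opp_seq. pose proof (Hpos i). lra. }
  assert (Hd : forall d, d > 0 -> exists N, forall n, (n >= N)%nat ->
             - d < v n - v (S n) < d).
  { intros d Hd. destruct (HW (k*d^2/2)) as [N HN].
    { assert (0 < k*d^2) by (apply Rmult_lt_0_compat; [lra| apply pow_lt; lra]). lra. }
    exists N. intros n Hn.
    pose proof (HN n Hn) as H1. pose proof (HN (S n) ltac:(lia)) as H2.
    unfold Rdist in H1, H2.
    apply Rabs_def2 in H1. apply Rabs_def2 in H2.
    pose proof (Hstep n).
    assert (Hsq : (v n - v (S n))^2 < d^2).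
    { assert (k * (v n - v (S n))^2 < k * d^2) by lra. nra. }
    split; nra. }
  assert (Hinf : forall N, exists n, (n >= N)%nat /\ 1/2 <= a * v (S n) + (1-a) * v n).
  { intro N. apply NNPP. intro Hno.
    assert (Hall : forall n, (n>=N)%nat -> a * v (S n) + (1-a)*v n < 1/2).
    { intros n Hn. apply Rnot_le_lt. intro Hc. apply Hno. exists n; auto. }
    set (h := fun n => v (S n) + (1-a)*v n).
    assert (hpos : h N > 0).
    { unfold h. pose proof (Hr N). pose proof (Hr (S N)).
      destruct (Hnz N) as [Hq|Hq]; nra. }
    assert (hgrow : forall m, h (m+N)%nat >= (1 + INR m * a) * h N).
    { induction m as [|m IH].
      - simpl. lra.
      - rewrite S_INR. simpl plus.
        set (j := (m + N)%nat) in *.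
        assert (Hj : (j >= N)%nat) by (unfold j; lia).
        assert (Ej : h (S j) = tent (a * v (S j) + (1-a) * v j) + (1-a) * v (S j))
          by (unfold h; rewrite Hrec; reflexivity).
        rewrite Ej. unfold tent.
        destruct (Rlt_dec _ (1/2)) as [Hz|Hz]; [|pose proof (Hall j Hj); lra].
        pose proof (Hr j). pose proof (Hr (S j)).
        assert (Hhj : h j = v (S j) + (1-a) * v j) by reflexivity.
        assert (0 <= INR m * a * h N).
        { apply Rmult_le_pos; [apply Rmult_le_pos; [apply pos_INR|lra]|lra]. }
        assert (h j >= h N) by lra.
        assert (2*(a*v(S j)+(1-a)*v j) + (1-a)*v(S j) >= (1+a)*h j).
        { rewrite Hhj.
          assert (E2: 2*(a*v(S j)+(1-a)*v j) + (1-a)*v(S j) - (1+a)*(v (S j) + (1-a)*v j) = (1-a)*(1-a)*v j) by ring.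
          assert (0 <= (1-a)*(1-a)*v j) by (apply Rmult_le_pos; [apply Rmult_le_pos|]; lra).
          lra. }
        assert (a * h j >= a * h N) by nra.
        lra. }
    destruct (INR_archimed (a * h N) 2) as [m Hm]; [nra|].
    pose proof (hgrow m).
    assert (h (m+N)%nat <= 2).
    { unfold h. pose proof (Hr (m+N)%nat). pose proof (Hr (S (m+N))). nra. }
    nra. }
  assert (Hmain : Un_cv v (2/3)).
  { intros eps Heps.
    set (e := Rmin eps (1/10)).
    assert (He1 : e <= eps) by apply Rmin_l.
    assert (He2 : e <= 1/10) by apply Rmin_r.
    assert (He0 : 0 < e) by (unfold e; apply Rmin_glb_lt; lra).
    set (dl := e/2).
    destruct (Hd dl ltac:(unfold dl; lra)) as [N1 HN1].
    destruct (Hinf N1) as [n0 [Hn0 Hz0]].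
    assert (Hzc : forall j : nat, -dl < a * v (S (j + n0)%nat) + (1-a) * v (j + n0)%nat - 2/3 < dl).
    { assert (F : forall n, (n >= N1)%nat ->
               a * v (S n) + (1-a) * v n < 3*dl \/
               -dl < a * v (S n) + (1-a) * v n - 2/3 < dl).
      { intros n Hn. pose proof (HN1 n Hn). pose proof (HN1 (S n) ltac:(lia)).
        pose proof (Hrec n) as E.
        assert (-dl < a * (v (S n) - v n) < dl) by (split; nra).
        unfold tent in E. destruct (Rlt_dec _ (1/2)) as [Hz|Hz]; [left|right]; lra. }
      induction j as [|j IH].
      - simpl. destruct (F n0 Hn0) as [Hq|Hq]; [unfold dl in *; lra|exact Hq].
      - simpl plus. set (n := (j + n0)%nat) in *.
        assert (Hn : (n >= N1)%nat) by (unfold n; lia).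
        pose proof (HN1 n Hn). pose proof (HN1 (S n) ltac:(lia)).
        assert (-dl < a * (v (S (S n)) - v (S n)) < dl) by (split; nra).
        assert (-dl < (1-a) * (v (S n) - v n) < dl) by (split; nra).
        destruct (F (S n) ltac:(lia)) as [Hq|Hq]; [|exact Hq].
        unfold dl in *; lra. }
    exists n0. intros n Hn. unfold Rdist.
    replace n with ((n - n0) + n0)%nat by lia.
    set (m := (n - n0 + n0)%nat).
    pose proof (Hzc (n - n0)%nat) as Hz. fold m in Hz.
    assert (Hm : (m >= N1)%nat) by (unfold m; lia).
    pose proof (HN1 m Hm).
    assert (-dl < a * (v (S m) - v m) < dl) by (split; nra).
    apply Rabs_def1; unfold dl in *; lra. }
  split.
  - exact Hmain.
  - intros eps Heps. destruct (Hmain eps Heps) as [N HN].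
    exists N. intros n Hn. apply (HN (S n)). lia.
Qed.
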